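(* Let $0<s_1<s_2$ and $m\ge1$. The defect capacitance matrix $\mathcal C\in\mathbb R^{(4m+1)\times(4m+1)}$ has at most one eigenvalue in the interval $\Gamma=\big(\frac{2}{s_2},\frac{2}{s_1}\big)$. Moreover, for all $m$ sufficiently large it has exactly one eigenvalue in $\Gamma$.
   Context: Set $\alpha=\frac1{s_1}+\frac1{s_2}$, $\beta_1=-\frac1{s_1}$, $\beta_2=-\frac1{s_2}$, $\eta=\frac2{s_2}$. The defect capacitance matrix $\mathcal C$ ($N=4m+1$) is the real symmetric tridiagonal matrix with diagonal entries $\mathcal C_{11}=\mathcal C_{NN}=\frac1{s_1}$, $\mathcal C_{2m+1,2m+1}=\eta$, $\mathcal C_{ii}=\alpha$ otherwise, and off-diagonal entries $\mathcal C_{i,i+1}=\mathcal C_{i+1,i}$ equal to $\beta_1$ ($i$ odd) and $\beta_2$ ($i$ even) for $1\le i\le 2m$, and $\beta_2$ ($i$ odd) and $\beta_1$ ($i$ even) for $2m+1\le i\le 4m$. It is the capacitance matrix of a chain of $4m+1$ identical resonators with spacings $s_i$ equal to $s_1$ ($i$ odd), $s_2$ ($i$ even) for $i\le 2m$ and $s_2$ ($i$ odd), $s_1$ ($i$ even) for $2m+1\le i\le 4m$. $\Gamma$ is the gap between the two spectral bands of the corresponding infinite periodic dimer chain. *)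

(* Defs.v *)
From HB Require Import structures.
From mathcomp Require Import all_boot all_order all_algebra.
From mathcomp Require Import reals.
Set Implicit Arguments.
Unset Strict Implicit.
Unset Printing Implicit Defensive.
Import Order.TTheory GRing.Theory Num.Theory.
Local Open Scope ring_scope.

(* Entry (i,j) of the defect capacitance matrix, with 1-based indices i j,
   N = 4m+1. *)
Definition defect_entry {R : realType} (s1 s2 : R) (m i j : nat) : R :=
  let N := (4 * m + 1)%N in
  if i == j then
    (if (i == 1%N) || (i == N) then s1^-1
     else if i == (2 * m + 1)%N then 2 / s2
     else s1^-1 + s2^-1)
  else if (j == i.+1) || (i == j.+1) then
    let k := minn i j in
    (if (k <= 2 * m)%N then (if odd k then - s1^-1 else - s2^-1)
     else (if odd k then - s2^-1 else - s1^-1))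
  else 0.

Definition defect_cap {R : realType} (s1 s2 : R) (m : nat) : 'M[R]_(4 * m + 1) :=
  \matrix_(i, j) defect_entry s1 s2 m i.+1 j.+1.

(* Main.v *)
Require Import Defs.
From HB Require Import structures.
From mathcomp Require Import all_boot all_order all_algebra.
From mathcomp Require Import reals.
From mathcomp Require Import ring lra zify.
Import Order.TTheory GRing.Theory Num.Theory.
Local Open Scope ring_scope.

Definition nf {R : realType} {n} (v : 'rV[R]_n) (k : nat) : R :=
  if insub k is Some i then v 0 i else 0.

Lemma nfE {R : realType} {n} (v : 'rV[R]_n) (i : 'I_n) : nf v i = v 0 i.
Proof. by rewrite /nf valK. Qed.

Lemma col_sum {R : realType} (s1 s2 : R) m (v : 'rV[R]_(4 * m + 1)) (j : 'I_(4 * m + 1)) :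
  (v *m defect_cap s1 s2 m) 0 j =
  \sum_(0 <= k < 4 * m + 1) nf v k * defect_entry s1 s2 m k.+1 j.+1.
Proof.
rewrite !mxE big_mkord; apply: eq_bigr => k _; by rewrite nfE mxE.
Qed.

Lemma entry_far {R : realType} (s1 s2 : R) m i j :
  i != j -> j != i.+1 -> i != j.+1 -> defect_entry s1 s2 m i j = 0.
Proof.
by move=> h1 h2 h3; rewrite /defect_entry (negbTE h1) (negbTE h2) (negbTE h3).
Qed.

Lemma entry_sym {R : realType} (s1 s2 : R) m i j :
  defect_entry s1 s2 m i j = defect_entry s1 s2 m j i.
Proof.
rewrite /defect_entry eq_sym; case: eqP => [->//|_].
by rewrite orbC minnC.
Qed.

Lemma tri_sum {R : realType} (G : nat -> R) n j : (0 < j)%N -> (j.+2 <= n)%N ->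
  (forall k, (k < j.-1)%N \/ (j.+1 < k)%N -> G k = 0) ->
  \sum_(0 <= k < n) G k = G j.-1 + G j + G j.+1.
Proof.
move=> hj hn hG.
rewrite (big_cat_nat (n := j.-1)) //; last by lia.
rewrite (big_cat_nat (n := j.+2) (m := j.-1)) /=; [|lia|lia].
rewrite big1_seq; last first.
  by move=> k /andP [_]; rewrite mem_index_iota => /andP [_ hk]; apply: hG; left.
rewrite [X in _ + (_ + X)]big1_seq; last first.
  by move=> k /andP [_]; rewrite mem_index_iota => /andP [hk _]; apply: hG; right.
rewrite add0r addr0.
have -> : j.+2 = j.-1.+3 by lia.
rewrite !big_nat_recr /= ?big_geq //; try lia.
by rewrite add0r; have -> : j.-1.+1 = j by lia.
Qed.

Lemma tri_sum0 {R : realType} (G : nat -> R) n : (2 <= n)%N ->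
  (forall k, (1 < k)%N -> G k = 0) ->
  \sum_(0 <= k < n) G k = G 0%N + G 1%N.
Proof.
move=> hn hG.
rewrite (big_cat_nat (n := 2)) //=.
rewrite [X in _ + X]big1_seq; last first.
  by move=> k /andP [_]; rewrite mem_index_iota => /andP [hk _]; apply: hG.
by rewrite addr0 !big_nat_recr //= big_geq // add0r.
Qed.

Lemma colE {R : realType} (s1 s2 : R) m (v : 'rV[R]_(4 * m + 1)) j
  (hj : (j < 4 * m + 1)%N) : (0 < j)%N -> (j.+2 <= 4 * m + 1)%N ->
  (v *m defect_cap s1 s2 m) 0 (Ordinal hj) =
  nf v j.-1 * defect_entry s1 s2 m j j.+1 + nf v j * defect_entry s1 s2 m j.+1 j.+1
  + nf v j.+1 * defect_entry s1 s2 m j.+2 j.+1.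
Proof.
move=> h0 h2; rewrite col_sum /= (@tri_sum R _ (4 * m + 1) j h0 h2); last first.
  move=> k hk; rewrite entry_far ?mulr0 //; apply/eqP; lia.
by rewrite prednK.
Qed.

Lemma colE0 {R : realType} (s1 s2 : R) m (v : 'rV[R]_(4 * m + 1))
  (hj : (0 < 4 * m + 1)%N) : (1 <= m)%N ->
  (v *m defect_cap s1 s2 m) 0 (Ordinal hj) =
  nf v 0 * defect_entry s1 s2 m 1 1 + nf v 1 * defect_entry s1 s2 m 2 1.
Proof.
move=> hm; rewrite col_sum /= (@tri_sum0 R _ (4 * m + 1)); last first.
  move=> k hk; rewrite entry_far ?mulr0 //; apply/eqP; lia.
  lia.
by [].
Qed.

Lemma E11 {R : realType} (s1 s2 : R) m : (1 <= m)%N -> defect_entry s1 s2 m 1 1 = s1^-1.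
Proof. by move=> hm; rewrite /defect_entry eqxx. Qed.

Lemma Ediag {R : realType} (s1 s2 : R) m i : (1 < i)%N -> (i <= 2 * m)%N ->
  defect_entry s1 s2 m i i = s1^-1 + s2^-1.
Proof.
move=> h1 h2; rewrite /defect_entry eqxx.
have -> : (i == 1%N) = false by apply/eqP; lia.
have -> : (i == (4 * m + 1)%N) = false by apply/eqP; lia.
have -> : (i == (2 * m + 1)%N) = false by apply/eqP; lia.
by [].
Qed.

Lemma EM {R : realType} (s1 s2 : R) m : (1 <= m)%N ->
  defect_entry s1 s2 m (2 * m + 1) (2 * m + 1) = 2 / s2.
Proof.
move=> h1; rewrite /defect_entry eqxx.
have -> : ((2 * m + 1)%N == 1%N) = false by apply/eqP; lia.
have -> : ((2 * m + 1)%N == (4 * m + 1)%N) = false by apply/eqP; lia.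
by rewrite ?eqxx.
Qed.

Lemma Eoff {R : realType} (s1 s2 : R) m i :
  defect_entry s1 s2 m i i.+1 =
  if (i <= 2 * m)%N then (if odd i then - s1^-1 else - s2^-1)
  else (if odd i then - s2^-1 else - s1^-1).
Proof.
rewrite /defect_entry.
have -> : (i == i.+1) = false by apply/eqP; lia.
have -> : minn i i.+1 = i by apply/minn_idPl; lia.
by rewrite eqxx.
Qed.
Fixpoint XP {R : realType} (al t : R) (j : nat) : R * R :=
  if j is j'.+1 then
    let p := XP al t j' in
    let o' := (1 + t - t*al) * p.2 - t * p.1 in (o', (1-al)*o' + (o' - p.2)/t)
  else (1, 1 - al).

Lemma lin_pos {R : realType} (P Q O E : R) :
  0 < O -> E^+2 < O^+2 -> 0 < P + Q -> 0 < P - Q -> 0 < P * O + Q * E.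
Proof.
move=> hO hE h1 h2.
have h3 : 0 < O + E /\ 0 < O - E.
  have hp : 0 < (O + E) * (O - E) by nra.
  split; nra.
case: h3 => h3 h4.
have : 2 * (P * O + Q * E) = (P + Q) * (O + E) + (P - Q) * (O - E) by ring.
nra.
Qed.

Lemma XP_inv {R : realType} (al t : R) : 1 < t -> 2 < t * al -> al < 2 ->
  forall j, 0 < (-1)^+j * (XP al t j).1 /\ ((XP al t j).2)^+2 < ((XP al t j).1)^+2.
Proof.
move=> ht hb ha; elim=> [|j [IH1 IH2]].
  rewrite /= expr0 mul1r; split; first lra.
  have h0 : 0 < al by nra.
  nra.
rewrite /=.
set o := (XP al t j).1; set e := (XP al t j).2.
set s : R := (-1)^+j.
have hs : s^+2 = 1 by rewrite /s -exprM mulnC exprM sqrrN expr1n expr1n.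
set O := s * o; set E := s * e.
have hO : 0 < O by [].
have hE : E^+2 < O^+2 by rewrite /E /O !exprMn hs !mul1r.
set k := 1 + t - t * al.
set O' := t * O - k * E.
have hO' : 0 < O'.
  have -> : O' = t * O + (- k) * E by rewrite /O'; ring.
  by apply: lin_pos => //; rewrite /k; nra.
set o' := k * e - t * o.
have eo : (-1)^+j.+1 * o' = O'.
  by rewrite exprS /O' /O /E /o' -/s; ring.
split; first by rewrite eo.
have tne : t != 0 by apply/eqP; lra.
set e' := (1 - al) * o' + (o' - e) / t.
have ee : (-1)^+j.+1 * e' = (1 - al) * O' + (O' + E) / t.
  rewrite exprS -/s /e' /O' /O /E /o'. field; exact: tne.
have hsq : forall x : R, x ^+ 2 = ((-1)^+j.+1 * x)^+2.
  by move=> x; rewrite exprMn -exprM mulnC exprM sqrrN !expr1n mul1r.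
rewrite (hsq e') (hsq o') ee eo.
set E' := (1 - al) * O' + (O' + E) / t.
have h1 : 0 < t * (O' - E').
  have -> : t * (O' - E') = ((t*al - 1) * t) * O + (- ((t*al - 1) * k + 1)) * E.
    rewrite /E' /O'; field; exact: tne.
  have hb2 : t * al < 2 * t by nra.
  apply: lin_pos => //; rewrite /k; move: hb hb2; generalize (t * al) => b hb hb2.
    have : 0 < (b - 2) * b by nra.
    nra.
  have : 0 < (b - 1) * (1 + 2*t - b) by nra.
  nra.
have h2 : 0 < t * (O' + E').
  have -> : t * (O' + E') = ((2*t - t*al + 1) * t) * O + (1 - (2*t - t*al + 1) * k) * E.
    rewrite /E' /O'; field; exact: tne.
  have hb2 : t * al < 2 * t by nra.
  apply: lin_pos => //; rewrite /k; move: hb hb2; generalize (t * al) => b hb hb2.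
    have : 0 < (2*t - b + 1) * (b - 1) by nra.
    nra.
  have : 0 < (2*t - b) * (2*t - b + 2) by nra.
  nra.
nra.
Qed.

Lemma eig_col {R : realType} (s1 s2 l : R) m (v : 'rV[R]_(4 * m + 1)) :
  v *m defect_cap s1 s2 m = l *: v ->
  forall j (hj : (j < 4 * m + 1)%N), (v *m defect_cap s1 s2 m) 0 (Ordinal hj) = l * nf v j.
Proof.
move=> he j hj; rewrite he mxE.
by rewrite -(nfE v (Ordinal hj)).
Qed.

Lemma link {R : realType} (s1 s2 l : R) m (v : 'rV[R]_(4 * m + 1)) :
  0 < s1 -> 0 < s2 -> (1 <= m)%N ->
  v *m defect_cap s1 s2 m = l *: v ->
  forall j, (j <= m)%N ->
    nf v (2 * j) = nf v 0 * (XP (l * s1) (s2 / s1) j).1 /\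
    ((j < m)%N -> nf v (2 * j).+1 = nf v 0 * (XP (l * s1) (s2 / s1) j).2).
Proof.
move=> hs1 hs2 hm he.
have s1n : s1 != 0 by apply/eqP; lra.
have s2n : s2 != 0 by apply/eqP; lra.
have hc := @eig_col R s1 s2 l m v he.
elim=> [|j IH] hj.
  split; first by rewrite /= mulr1.
  move=> _ /=.
  have h0 : (0 < 4 * m + 1)%N by lia.
  have := hc 0%N h0; rewrite colE0 // E11 // entry_sym Eoff /=.
  have -> : (1 <= 2 * m)%N by lia.
  move=> e.
  have -> : nf v 1 = nf v 0 - s1 * (nf v 0 * s1^-1 + nf v 1 * - s1^-1) by field.
  by rewrite e; field.
have hjm : (j < m)%N by lia.
have [IH1 IH2] := IH (ltnW hj).
have {}IH2 := IH2 hjm.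
set o := (XP (l * s1) (s2 / s1) j).1 in IH1 *.
set e := (XP (l * s1) (s2 / s1) j).2 in IH2 *.
have hA : nf v (2 * j.+1) = nf v 0 * (XP (l * s1) (s2 / s1) j.+1).1.
  have h1 : ((2 * j).+1 < 4 * m + 1)%N by lia.
  have := hc _ h1; rewrite colE /=; [|lia|lia].
  rewrite [defect_entry _ _ _ (2 * j).+3 _]entry_sym !Eoff Ediag; [|lia|lia].
  have -> : ((2 * j).+1 <= 2 * m)%N by lia.
  have -> : ((2 * j).+2 <= 2 * m)%N by lia.
  rewrite /= ?oddS oddM /=.
  have -> : (2 * j.+1 = (2 * j).+2)%N by lia.
  rewrite -/o -/e IH1 IH2 => eq.
  have -> : nf v (2 * j).+2 = s2 * (- (nf v 0 * o) / s1 + nf v 0 * e * (s1^-1 + s2^-1)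
            - (nf v 0 * o * - s1^-1 + nf v 0 * e * (s1^-1 + s2^-1) + nf v (2 * j).+2 * - s2^-1))
    by field; rewrite ?s1n ?s2n.
  by rewrite eq; field; rewrite s1n s2n.
split=> // hjm'.
set o' := (XP (l * s1) (s2 / s1) j.+1).1 in hA *.
have -> : (XP (l * s1) (s2 / s1) j.+1).2 = (1 - l * s1) * o' + (o' - e) / (s2 / s1) by [].
have e2 : (2 * j.+1 = (2 * j).+2)%N by lia.
rewrite e2 in hA *.
have h1 : ((2 * j).+2 < 4 * m + 1)%N by lia.
have := hc _ h1; rewrite colE; [|lia|lia].
change ((2 * j).+2.-1) with ((2 * j).+1).
rewrite [defect_entry _ _ _ (2 * j).+4 _]entry_sym !Eoff Ediag; [|lia|lia].
have -> : ((2 * j).+2 <= 2 * m)%N by lia.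
have -> : ((2 * j).+3 <= 2 * m)%N by lia.
rewrite !oddS oddM /=.
rewrite IH2 hA => eq.
have -> : nf v (2 * j).+3 = s1 * (- (nf v 0 * e) / s2 + nf v 0 * o' * (s1^-1 + s2^-1)
            - (nf v 0 * e * - s2^-1 + nf v 0 * o' * (s1^-1 + s2^-1) + nf v (2 * j).+3 * - s1^-1))
    by field; rewrite ?s1n ?s2n.
by rewrite eq; field; rewrite s1n s2n.
Qed.

Lemma Eoff_rev {R : realType} (s1 s2 : R) m i : (i.+1 <= 4 * m)%N ->
  defect_entry s1 s2 m (4 * m - i) (4 * m - i).+1 = defect_entry s1 s2 m i.+1 i.+2.
Proof.
move=> hi; rewrite !Eoff.
have ho : odd (4 * m - i) = odd i by rewrite oddB ?oddM //=; lia.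
rewrite ho /=.
case: (leqP i.+1 (2 * m)) => h1.
  have -> : (4 * m - i <= 2 * m)%N = false by apply/negbTE; rewrite -ltnNge; lia.
  by case: (odd i).
have -> : (4 * m - i <= 2 * m)%N by lia.
by case: (odd i).
Qed.

Lemma entry_rev {R : realType} (s1 s2 : R) m i j : (i < 4 * m + 1)%N -> (j < 4 * m + 1)%N ->
  defect_entry s1 s2 m (4 * m - i).+1 (4 * m - j).+1 = defect_entry s1 s2 m i.+1 j.+1.
Proof.
move=> hi hj.
case: (ltngtP i j) => hij; last first.
- subst j; rewrite /defect_entry !eqxx.
  have -> : ((4 * m - i).+1 == 1%N) = (i.+1 == (4 * m + 1)%N) by apply/eqP/eqP; lia.
  have -> : ((4 * m - i).+1 == (4 * m + 1)%N) = (i.+1 == 1%N) by apply/eqP/eqP; lia.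
  have -> : ((4 * m - i).+1 == (2 * m + 1)%N) = (i.+1 == (2 * m + 1)%N) by apply/eqP/eqP; lia.
  by rewrite orbC.
-
  case: (eqVneq i j.+1) => hij'.
    subst i.
    have -> : ((4 * m - j.+1).+1 = 4 * m - j)%N by lia.
    rewrite [RHS]entry_sym Eoff_rev //; lia.
  rewrite !entry_far //; apply/eqP; lia.
- case: (eqVneq j i.+1) => hij'.
    subst j.
    have -> : ((4 * m - i.+1).+1 = 4 * m - i)%N by lia.
    rewrite entry_sym Eoff_rev //; lia.
  rewrite !entry_far //; apply/eqP; lia.
Qed.

Definition vrev {R : realType} {n} (v : 'rV[R]_n) : 'rV[R]_n := \row_k v 0 (rev_ord k).

Lemma rev_mul {R : realType} (s1 s2 : R) m (v : 'rV[R]_(4 * m + 1)) j :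
  (vrev v *m defect_cap s1 s2 m) 0 j = (v *m defect_cap s1 s2 m) 0 (rev_ord j).
Proof.
rewrite !mxE (reindex_inj rev_ord_inj) /=; apply: eq_bigr => k _.
rewrite !mxE rev_ordK; congr (_ * _).
have hk := ltn_ord k; have hj := ltn_ord j.
have hj' : (4 * m - j < 4 * m + 1)%N by lia.
transitivity (defect_entry s1 s2 m k.+1 (4 * m - j).+1); last first.
  by congr (defect_entry _ _ _ _ _.+1); rewrite /=; lia.
rewrite -(@entry_rev R s1 s2 m k (4 * m - j) hk hj') /=.
congr (defect_entry _ _ _ _.+1 _.+1); lia.
Qed.

Lemma rev_eig {R : realType} (s1 s2 l : R) m (v : 'rV[R]_(4 * m + 1)) :
  v *m defect_cap s1 s2 m = l *: v -> vrev v *m defect_cap s1 s2 m = l *: vrev v.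
Proof.
move=> he; apply/rowP => j; rewrite rev_mul he !mxE //.
Qed.

Lemma nf_rev {R : realType} m (v : 'rV[R]_(4 * m + 1)) k : (k < 4 * m + 1)%N ->
  nf (vrev v) k = nf v (4 * m - k).
Proof.
move=> hk; rewrite -[k]/(nat_of_ord (Ordinal hk)) nfE mxE -nfE /=.
congr (nf v _); lia.
Qed.

Lemma cap_tr {R : realType} (s1 s2 : R) m : (defect_cap s1 s2 m)^T = defect_cap s1 s2 m.
Proof. by apply/matrixP => i j; rewrite !mxE entry_sym. Qed.

Lemma orth {R : realType} (s1 s2 a b : R) m (u v : 'rV[R]_(4 * m + 1)) :
  u *m defect_cap s1 s2 m = a *: u -> v *m defect_cap s1 s2 m = b *: v -> a != b ->
  \sum_(0 <= k < 4 * m + 1) nf u k * nf v k = 0.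
Proof.
move=> hu hv hab.
have e1 : u *m defect_cap s1 s2 m *m v^T = a *: (u *m v^T) by rewrite hu scalemxAl.
have e2 : u *m defect_cap s1 s2 m *m v^T = b *: (u *m v^T).
  by rewrite -mulmxA -[defect_cap _ _ _]cap_tr -trmx_mul hv linearZ /= scalemxAr.
have : (a - b) *: (u *m v^T) = 0 by rewrite scalerBl -e1 -e2 subrr.
move/eqP; rewrite scaler_eq0 subr_eq0 (negbTE hab) /= => /eqP h.
have := congr1 (fun M : 'M[R]_1 => M 0 0) h; rewrite !mxE => h0.
apply: (etrans _ h0); rewrite big_mkord.
by apply: eq_bigr => k _; rewrite !nfE mxE.
Qed.

Lemma sum_split {R : realType} (F : nat -> R) m :
  \sum_(0 <= k < 4 * m + 1) F k =
  \sum_(0 <= k < 2 * m) F k + F (2 * m)%N + \sum_(0 <= k < 2 * m) F (4 * m - k)%N.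
Proof.
rewrite (big_cat_nat (n := (2 * m).+1)) /=; [|lia|lia].
rewrite big_nat_recr //=; congr (_ + _).
rewrite big_nat_rev /=.
rewrite -{1}[(2 * m).+1]add0n big_addn.
have -> : (4 * m + 1 - (2 * m).+1 = 2 * m)%N by lia.
apply: eq_bigr => k _; congr (F _); lia.
Qed.

Lemma sum_pairs {R : realType} (F : nat -> R) m :
  \sum_(0 <= k < 2 * m) F k = \sum_(0 <= j < m) (F (2 * j)%N + F (2 * j).+1).
Proof.
elim: m => [|m IH]; first by rewrite !big_geq.
have -> : (2 * m.+1 = (2 * m).+2)%N by lia.
by rewrite !big_nat_recr //= IH addrA.
Qed.
Arguments link {R s1 s2 l m v}.
Arguments rev_eig {R s1 s2 l m v}.
Arguments XP_inv {R al t}.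
Arguments orth {R s1 s2 a b m u v}.
Arguments nf_rev {R m v k}.

Lemma pair_pos {R : realType} (A B t : R) : 1 < t -> 2 < t * A -> A < 2 -> 2 < t * B -> B < 2 ->
  forall j, 0 < (XP A t j).1 * (XP B t j).1 /\
            0 < (XP A t j).1 * (XP B t j).1 + (XP A t j).2 * (XP B t j).2.
Proof.
move=> ht hA1 hA2 hB1 hB2 j.
have [a1 a2] := XP_inv ht hA1 hA2 j.
have [b1 b2] := XP_inv ht hB1 hB2 j.
set s : R := (-1)^+j in a1 b1.
have hs : s * s = 1 by rewrite /s -exprD addnn -mul2n exprM sqrrN !expr1n.
have p : 0 < (XP A t j).1 * (XP B t j).1.
  have -> : (XP A t j).1 * (XP B t j).1 = (s * (XP A t j).1) * (s * (XP B t j).1).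
    by rewrite mulrACA hs mul1r.
  exact: mulr_gt0.
split=> //.
set oa := (XP A t j).1 in a2 p *; set ob := (XP B t j).1 in b2 p *.
set ea := (XP A t j).2 in a2 *; set eb := (XP B t j).2 in b2 *.
have ob0 : 0 < ob ^+ 2 by rewrite lt_def sqrf_eq0 sqr_ge0 andbT; apply/eqP => h0; move: p; rewrite h0 mulr0 ltxx.
have h1 : ea ^+ 2 * eb ^+ 2 <= ea ^+ 2 * ob ^+ 2 by apply: ler_wpM2l; [exact: sqr_ge0| exact: ltW].
have h2 : ea ^+ 2 * ob ^+ 2 < oa ^+ 2 * ob ^+ 2 by rewrite ltr_pM2r.
have h : (ea * eb) ^+ 2 < (oa * ob) ^+ 2 by rewrite !exprMn; exact: le_lt_trans h1 h2.
nra.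
Qed.

Arguments pair_pos {R A B t}.

Lemma even_odd_split k : exists j, k = (2 * j)%N \/ k = (2 * j).+1.
Proof.
exists k./2; have := odd_double_half k; rewrite -mul2n.
case: (odd k) => /= h; [right|left]; lia.
Qed.

Lemma link_zero {R : realType} {s1 s2 l : R} {m} {v : 'rV[R]_(4 * m + 1)} :
  0 < s1 -> 0 < s2 -> (1 <= m)%N ->
  v *m defect_cap s1 s2 m = l *: v -> nf v 0 = 0 ->
  forall k, (k <= 2 * m)%N -> nf v k = 0.
Proof.
move=> hs1 hs2 hm he h0 k hk.
have L := link hs1 hs2 hm he.
have [j [hj | hj]] := even_odd_split k; subst k.
  by have [-> _] := L j ltac:(lia); rewrite h0 mul0r.
by have [_ ->] := L j ltac:(lia); [rewrite h0 mul0r | lia].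
Qed.

Lemma zero_vec {R : realType} {s1 s2 l : R} {m} {v : 'rV[R]_(4 * m + 1)} :
  0 < s1 -> 0 < s2 -> (1 <= m)%N ->
  v *m defect_cap s1 s2 m = l *: v -> nf v 0 = 0 -> nf v (4 * m) = 0 -> v = 0.
Proof.
move=> hs1 hs2 hm he h0 h4.
apply/rowP => k; rewrite mxE -nfE.
have hk := ltn_ord k.
case: (leqP k (2 * m)) => hk2; first exact: (link_zero hs1 hs2 hm he).
have hr := rev_eig he.
have r0 : nf (vrev v) 0 = 0 by rewrite nf_rev ?subn0 //; lia.
have := link_zero hs1 hs2 hm hr r0 (4 * m - k) ltac:(lia).
rewrite nf_rev; last by lia.
by have -> : (4 * m - (4 * m - k) = k)%N by lia.
Qed.

Lemma gap_conv {R : realType} {s1 s2 l : R} : 0 < s1 -> s1 < s2 -> 2 / s2 < l < 2 / s1 ->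
  1 < s2 / s1 /\ 2 < s2 / s1 * (l * s1) /\ l * s1 < 2.
Proof.
move=> h1 h2 /andP [h3 h4].
have s2p : 0 < s2 by lra.
split; first by rewrite ltr_pdivlMr // mul1r.
have -> : s2 / s1 * (l * s1) = l * s2 by field; apply/eqP; lra.
split.
  by move: h3; rewrite ltr_pdivrMr.
by move: h4; rewrite ltr_pdivlMr.
Qed.

Lemma unique_eig {R : realType} (s1 s2 : R) m a b :
  0 < s1 -> s1 < s2 -> (1 <= m)%N ->
  2 / s2 < a < 2 / s1 -> eigenvalue (defect_cap s1 s2 m) a ->
  2 / s2 < b < 2 / s1 -> eigenvalue (defect_cap s1 s2 m) b -> a = b.
Proof.
move=> hs1 hs12 hm ha /eigenvalueP [u hu u0] hb /eigenvalueP [v hv v0].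
have hn0 : (0 < 4 * m + 1)%N by lia.
have h2m : (2 * m < 4 * m + 1)%N by lia.
have e42 : (4 * m - 2 * m = 2 * m)%N by lia.
have hs2 : 0 < s2 by lra.
case: (eqVneq a b) => // hab; exfalso.
have [ht [hA1 hA2]] := gap_conv hs1 hs12 ha.
have [_ [hB1 hB2]] := gap_conv hs1 hs12 hb.
set t := s2 / s1 in ht hA1 hB1.
set A := a * s1 in hA1 hA2; set B := b * s1 in hB1 hB2.
have Lu := link hs1 hs2 hm hu; have Lv := link hs1 hs2 hm hv.
have Lur := link hs1 hs2 hm (rev_eig hu); have Lvr := link hs1 hs2 hm (rev_eig hv).
set cu := nf u 0; set cv := nf v 0.
have oA : (XP A t m).1 != 0.
  by have [h _] := XP_inv ht hA1 hA2 m; apply/eqP => h0; move: h; rewrite h0 mulr0 ltxx.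
have oB : (XP B t m).1 != 0.
  by have [h _] := XP_inv ht hB1 hB2 m; apply/eqP => h0; move: h; rewrite h0 mulr0 ltxx.
have cur : nf (vrev u) 0 = cu.
  have [h1 _] := Lu m (leqnn m); have [h2 _] := Lur m (leqnn m).
  move: h2; rewrite nf_rev // e42.
  rewrite h1 => /(mulIf oA) //.
have cvr : nf (vrev v) 0 = cv.
  have [h1 _] := Lv m (leqnn m); have [h2 _] := Lvr m (leqnn m).
  move: h2; rewrite nf_rev // e42.
  rewrite h1 => /(mulIf oB) //.
have cu0 : cu != 0.
  apply/eqP => h0; move/eqP: u0; apply.
  apply: (zero_vec hs1 hs2 hm hu h0).
  have -> : nf u (4 * m) = nf (vrev u) 0 by rewrite nf_rev // subn0.
  by rewrite cur.
have cv0 : cv != 0.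
  apply/eqP => h0; move/eqP: v0; apply.
  apply: (zero_vec hs1 hs2 hm hv h0).
  have -> : nf v (4 * m) = nf (vrev v) 0 by rewrite nf_rev // subn0.
  by rewrite cvr.
set S := \sum_(0 <= j < m) ((XP A t j).1 * (XP B t j).1 + (XP A t j).2 * (XP B t j).2).
have half1 : \sum_(0 <= k < 2 * m) nf u k * nf v k = cu * cv * S.
  rewrite sum_pairs /S big_distrr /=; apply: eq_big_nat => j /andP [_ hj].
  have [e1 e2] := Lu j (ltnW hj); have [f1 f2] := Lv j (ltnW hj).
  rewrite e1 f1 (e2 hj) (f2 hj) -/cu -/cv; ring.
have half2 : \sum_(0 <= k < 2 * m) nf u (4 * m - k) * nf v (4 * m - k) = cu * cv * S.
  rewrite (eq_big_nat _ _ (F2 := fun k => nf (vrev u) k * nf (vrev v) k)); last first.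
    by move=> k /andP [_ hk]; rewrite !nf_rev // (ltn_trans hk h2m).
  rewrite sum_pairs /S big_distrr /=; apply: eq_big_nat => j /andP [_ hj].
  have [e1 e2] := Lur j (ltnW hj); have [f1 f2] := Lvr j (ltnW hj).
  rewrite e1 f1 (e2 hj) (f2 hj) cur cvr; ring.
have mid : nf u (2 * m) * nf v (2 * m) = cu * cv * ((XP A t m).1 * (XP B t m).1).
  have [e1 _] := Lu m (leqnn m); have [f1 _] := Lv m (leqnn m).
  rewrite e1 f1 -/cu -/cv; ring.
have := orth hu hv hab; rewrite sum_split half1 half2 mid.
have Spos : 0 < S.
  have [m' em] : exists m', m = m'.+1 by exists m.-1; rewrite prednK.
  rewrite /S em big_nat_recr //=.
  have [_ p] := pair_pos ht hA1 hA2 hB1 hB2 m'.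
  apply: (lt_le_trans p); rewrite lerDr; apply: sumr_ge0 => j _.
  by have [_ q] := pair_pos ht hA1 hA2 hB1 hB2 j; exact: ltW.
have [P _] := pair_pos ht hA1 hA2 hB1 hB2 m.
have -> : cu * cv * S + cu * cv * ((XP A t m).1 * (XP B t m).1) + cu * cv * S =
          (cu * cv) * (2 * S + (XP A t m).1 * (XP B t m).1) by ring.
move/eqP; rewrite !mulf_eq0 (negbTE cu0) (negbTE cv0) /=.
by apply/negP; rewrite gt_eqF //; lra.
Qed.

Definition Xz {R : realType} (al t : R) (k : nat) : R :=
  if odd k then (XP al t k./2).2 else (XP al t k./2).1.

Lemma Xz_even {R : realType} (al t : R) i : Xz al t (2 * i) = (XP al t i).1.
Proof. by rewrite /Xz mul2n odd_double doubleK. Qed.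

Lemma Xz_odd {R : realType} (al t : R) i : Xz al t (2 * i).+1 = (XP al t i).2.
Proof. by rewrite /Xz mul2n /= odd_double /= uphalf_double. Qed.

Definition gv {R : realType} (al t : R) m (k : nat) : R :=
  Xz al t (if (k <= 2 * m)%N then k else (4 * m - k)%N).

Definition wv {R : realType} (al t : R) m : 'rV[R]_(4 * m + 1) := \row_k gv al t m k.

Lemma nf_wv {R : realType} (al t : R) m k : (k < 4 * m + 1)%N -> nf (wv al t m) k = gv al t m k.
Proof. by move=> hk; rewrite -[k]/(nat_of_ord (Ordinal hk)) nfE mxE. Qed.

Lemma wv_sym {R : realType} (al t : R) m : vrev (wv al t m) = wv al t m.
Proof.
apply/rowP => k; rewrite !mxE /gv /=.
have hk := ltn_ord k.
case: (leqP k (2 * m)) => h1.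
  have -> : (4 * m + 1 - k.+1 <= 2 * m)%N = (nat_of_ord k == 2 * m)%N.
    by apply/idP/eqP; lia.
  case: eqP => [->|h2]; first by congr Xz; lia.
  by congr Xz; lia.
have -> : (4 * m + 1 - k.+1 <= 2 * m)%N by lia.
by congr Xz; lia.
Qed.

Lemma gv_le {R : realType} (al t : R) m k : (k <= 2 * m)%N -> gv al t m k = Xz al t k.
Proof. by move=> hk; rewrite /gv hk. Qed.

Lemma gv_M1 {R : realType} (al t : R) m : (1 <= m)%N ->
  gv al t m (2 * m).+1 = (XP al t m.-1).2.
Proof.
move=> hm; rewrite /gv.
have -> : ((2 * m).+1 <= 2 * m)%N = false by lia.
have -> : (4 * m - (2 * m).+1 = (2 * m.-1).+1)%N by lia.
by rewrite Xz_odd.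
Qed.


Lemma wv_left {R : realType} (s1 s2 al : R) m : 0 < s1 -> 0 < s2 -> (1 <= m)%N ->
  2 * ((XP al (s2 / s1) m).1 - (XP al (s2 / s1) m.-1).2) - s2 / s1 * (al * (XP al (s2 / s1) m).1) = 0 ->
  forall j (hj : (j < 4 * m + 1)%N), (j <= 2 * m)%N ->
  (wv al (s2 / s1) m *m defect_cap s1 s2 m) 0 (Ordinal hj) = al / s1 * nf (wv al (s2 / s1) m) j.
Proof.
move=> hs1 hs2 hm hH j hj hj2.
have s1n : s1 != 0 by apply/eqP; lra.
have s2n : s2 != 0 by apply/eqP; lra.
set t := s2 / s1 in hH *.
set w := wv al t m.
have nw : forall k, (k <= 2 * m)%N -> nf w k = Xz al t k.
  by move=> k hk; rewrite nf_wv ?gv_le //; lia.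
have [i [hi | hi]] := even_odd_split j; subst j.
- case: (posnP i) => hi0.
    subst i.
    rewrite colE0 // E11 // entry_sym Eoff /=.
    have -> : (1 <= 2 * m)%N by lia.
    rewrite !nw //; try lia.
    rewrite -[0%N]/(2 * 0)%N Xz_even -[1%N]/((2 * 0).+1)%N Xz_odd /= /t.
    by field; rewrite s1n.
  case: (eqVneq i m) => him.
    subst i.
    rewrite colE; [|lia|lia].
    have e1 : ((2 * m).-1 = (2 * m.-1).+1)%N by lia.
    rewrite e1 [defect_entry _ _ _ (2 * m).+2 _]entry_sym !Eoff.
    have -> : (2 * m).+1 = (2 * m + 1)%N by lia.
    rewrite EM //.
    have -> : (2 * m <= 2 * m)%N by [].
    have -> : ((2 * m + 1)%N <= 2 * m)%N = false by lia.
    have -> : odd (2 * m + 1) by rewrite addn1 /= oddM.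
    rewrite oddM /=.
    rewrite nw; last by lia.
    rewrite nw // Xz_even Xz_odd.
    have -> : (2 * m + 1)%N = (2 * m).+1 by lia.
    rewrite nf_wv; last by lia.
    rewrite gv_M1 //.
    move: hH; rewrite /t => hH.
    set o := (XP al (s2 / s1) m).1 in hH *; set e := (XP al (s2 / s1) m.-1).2 in hH *.
    have -> : e * - s2^-1 + o * (2 / s2) + e * - s2^-1 = (2 * (o - e)) / s2 by field.
    have -> : 2 * (o - e) = s2 / s1 * (al * o) by lra.
    by field; rewrite s1n s2n.
  have [i' ei] : exists i', i = i'.+1 by exists i.-1; rewrite prednK.
  subst i.
  have him' : (i'.+1 < m)%N by lia.
  rewrite colE; [|lia|lia].
  have e1 : ((2 * i'.+1).-1 = (2 * i').+1)%N by lia.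
  have e2 : ((2 * i'.+1) = (2 * i').+2)%N by lia.
  rewrite e1 e2 [defect_entry _ _ _ (2 * i').+4 _]entry_sym !Eoff Ediag; [|lia|lia].
  have -> : ((2 * i').+2 <= 2 * m)%N by lia.
  have -> : ((2 * i').+3 <= 2 * m)%N by lia.
  rewrite !oddS oddM /=.
  rewrite !nw; try lia.
  rewrite -e2 Xz_even.
  rewrite !Xz_odd /=.
  set o' := (1 + t - t * al) * (XP al t i').2 - t * (XP al t i').1.
  set e := (XP al t i').2.
  by rewrite /t; field; rewrite s1n s2n.
-
  have him : (i < m)%N by lia.
  rewrite colE; [|lia|lia].
  have e1 : ((2 * i).+1.-1 = 2 * i)%N by [].
  rewrite e1 [defect_entry _ _ _ (2 * i).+3 _]entry_sym !Eoff Ediag; [|lia|lia].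
  have -> : ((2 * i).+1 <= 2 * m)%N by lia.
  have -> : ((2 * i).+2 <= 2 * m)%N by lia.
  rewrite !oddS oddM /=.
  rewrite !nw; try lia.
  have -> : ((2 * i).+2 = (2 * i.+1))%N by lia.
  rewrite !Xz_even Xz_odd /=.
  by rewrite /t; field; rewrite s1n s2n.
Qed.

Lemma wv_eig {R : realType} (s1 s2 al : R) m : 0 < s1 -> 0 < s2 -> (1 <= m)%N ->
  2 * ((XP al (s2 / s1) m).1 - (XP al (s2 / s1) m.-1).2) - s2 / s1 * (al * (XP al (s2 / s1) m).1) = 0 ->
  eigenvalue (defect_cap s1 s2 m) (al / s1).
Proof.
move=> hs1 hs2 hm hH.
have WL := @wv_left R s1 s2 al m hs1 hs2 hm hH.
apply/eigenvalueP; exists (wv al (s2 / s1) m); last first.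
  have hn0 : (0 < 4 * m + 1)%N by lia.
  apply/eqP => h0; have := congr1 (fun M : 'rV[R]_(4 * m + 1) => M 0 (Ordinal hn0)) h0.
  by rewrite !mxE /gv /Xz /= => /eqP; rewrite oner_eq0.
apply/rowP => k; rewrite [RHS]mxE.
case: (leqP k (2 * m)) => hk.
  have := WL _ (ltn_ord k) hk.
  rewrite (_ : Ordinal (ltn_ord k) = k); last by apply: val_inj.
  by rewrite nfE.
rewrite -[in LHS]wv_sym rev_mul.
have hr : (rev_ord k <= 2 * m)%N by rewrite /=; have := ltn_ord k; lia.
have := WL _ (ltn_ord (rev_ord k)) hr.
rewrite (_ : Ordinal (ltn_ord (rev_ord k)) = rev_ord k); last by apply: val_inj.
rewrite nfE => ->.
have := congr1 (fun M : 'rV[R]_(4 * m + 1) => M 0 k) (wv_sym al (s2 / s1) m).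
by rewrite mxE => ->.
Qed.

Lemma XP_two {R : realType} (t : R) : t != 0 -> forall j, XP 2 t j = ((-1)^+j, - (-1)^+j).
Proof.
move=> tn; elim=> [|j IH] /=; first by congr pair; rewrite expr0 //; lra.
rewrite IH /= !exprS; by congr pair; field; rewrite ?tn.
Qed.

Lemma XP_edge {R : realType} (t : R) : t != 0 -> forall j,
  XP (2 / t) t j = ((-1)^+j * (1 + j%:R * (2 * (t - 1) / t)),
                    (-1)^+j * ((t - 2) / t + j%:R * (2 * (t - 1) / t))).
Proof.
move=> tn; elim=> [|j IH] /=.
  by congr pair; rewrite expr0 !mul0r !addr0 mul1r //; field.
rewrite IH /= !exprS -natr1; by congr pair; field; rewrite ?tn.
Qed.

Fixpoint XPp {R : realType} (t : R) (j : nat) : {poly R} * {poly R} :=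
  if j is j'.+1 then
    let p := XPp t j' in
    let o' := ((1 + t)%:P - t *: 'X) * p.2 - t *: p.1 in
    (o', (1 - 'X) * o' + t^-1 *: (o' - p.2))
  else (1, 1 - 'X).

Lemma XPp_horner {R : realType} (t al : R) j :
  (XPp t j).1.[al] = (XP al t j).1 /\ (XPp t j).2.[al] = (XP al t j).2.
Proof.
elim: j => [|j [IH1 IH2]] /=.
  by rewrite !hornerE.
rewrite !hornerE IH1 IH2; split; ring.
Qed.

Definition Hp {R : realType} (t : R) m : {poly R} :=
  2%:P * ((XPp t m).1 - (XPp t m.-1).2) - (t%:P * 'X) * (XPp t m).1.

Lemma Hp_horner {R : realType} (t al : R) m :
  (Hp t m).[al] = 2 * ((XP al t m).1 - (XP al t m.-1).2) - t * al * (XP al t m).1.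
Proof.
have [h1 _] := XPp_horner t al m; have [_ h2] := XPp_horner t al m.-1.
by rewrite /Hp !hornerE h1 h2.
Qed.

Lemma ivt_strict {R : realType} (p : {poly R}) a b : a < b -> p.[a] * p.[b] < 0 ->
  exists x, a < x < b /\ p.[x] = 0.
Proof.
move=> hab hp.
have gen : forall q : {poly R}, q.[a] < 0 -> 0 < q.[b] -> exists x, a < x < b /\ q.[x] = 0.
  move=> q qa qb.
  have [x /andP [h1 h2] /rootP hx] := @poly_ivt R q a b (ltW hab) ltac:(apply/andP; split; exact: ltW).
  exists x; split => //.
  apply/andP; split; rewrite lt_def ?h1 ?h2 andbT.
    by apply/eqP => ex; move: qa; rewrite -ex hx ltxx.
  by apply/eqP => ex; move: qb; rewrite ex hx ltxx.
case: (ltP (p.[a]) 0) => ha.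
  apply: gen => //; by rewrite -(nmulr_rlt0 _ ha).
have [x [h1 h2]] : exists x, a < x < b /\ (- p).[x] = 0.
  have pa : 0 < p.[a].
    by rewrite lt_def ha andbT; apply/eqP => e0; move: hp; rewrite e0 mul0r ltxx.
  have pb : p.[b] < 0 by rewrite -(pmulr_rlt0 _ pa).
  by apply: gen; rewrite hornerN; lra.
by exists x; split => //; move: h2; rewrite hornerN => /eqP; rewrite oppr_eq0 => /eqP.
Qed.

Theorem mainTheorem7 (R : realType) (s1 s2 : R) :
  0 < s1 -> s1 < s2 ->
  (forall m : nat, (1 <= m)%N ->
     forall a b : R,
       2 / s2 < a < 2 / s1 -> eigenvalue (defect_cap s1 s2 m) a ->
       2 / s2 < b < 2 / s1 -> eigenvalue (defect_cap s1 s2 m) b ->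
       a = b) /\
  (exists M : nat, forall m : nat, (M <= m)%N -> (1 <= m)%N ->
     exists a : R,
       (2 / s2 < a < 2 / s1 /\ eigenvalue (defect_cap s1 s2 m) a) /\
       (forall b : R, 2 / s2 < b < 2 / s1 ->
          eigenvalue (defect_cap s1 s2 m) b -> b = a)).
Proof.
move=> hs1 hs12.
split.
  by move=> m hm a b ha ea hb eb; exact: (unique_eig s1 s2 m a b hs1 hs12 hm ha ea hb eb).
have hs2 : 0 < s2 by lra.
have s1n : s1 != 0 by apply/eqP; lra.
set t := s2 / s1.
have ht : 1 < t by rewrite /t ltr_pdivlMr // mul1r.
have tn : t != 0 by apply/eqP; lra.
have tp : 0 < t by lra.
have hK := @archi_boundP R ((t - 1)^-1) ltac:(rewrite invr_ge0; lra).
set K := Num.Def.archi_bound _ in hK.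
exists K.+1 => m hKm hm.
have [m' em] : exists m', m = m'.+1 by exists m.-1; rewrite prednK.
have hm' : (K <= m')%N by lia.
have q0 : 0 < (t - 2) / t + m'%:R * (2 * (t - 1) / t).
  have h1 : (t - 1)^-1 < m'%:R by apply: (lt_le_trans hK); rewrite ler_nat.
  have h2 : 1 < m'%:R * (t - 1).
    by move: h1; rewrite -div1r ltr_pdivrMr //; lra.
  have -> : (t - 2) / t + m'%:R * (2 * (t - 1) / t) = (t - 2 + 2 * (m'%:R * (t - 1))) / t.
    by field.
  apply: divr_gt0 => //; lra.
have hprod : (Hp t m).[2 / t] * (Hp t m).[2] < 0.
  rewrite !Hp_horner em !XP_edge // !XP_two // /= !exprS.
  have tt : t * (2 / t) = 2 by field.
  rewrite tt.
  set q := (t - 2) / t + m'%:R * (2 * (t - 1) / t) in q0 *.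
  set s : R := (-1)^+m'.
  have hs : s * s = 1 by rewrite /s -exprD addnn -mul2n exprM sqrrN !expr1n.
  have E : forall x : R, x = -(4 * t * q * (s * s)) -> x < 0.
    by move=> x ->; rewrite hs mulr1 oppr_lt0; apply: mulr_gt0 => //; apply: mulr_gt0 => //; lra.
  apply: E; ring.
have h2t : 2 / t < 2 by rewrite ltr_pdivrMr //; lra.
have [al [hal hroot]] := @ivt_strict R _ _ _ h2t hprod.
move: hroot; rewrite Hp_horner => hroot.
have eig : eigenvalue (defect_cap s1 s2 m) (al / s1).
  apply: wv_eig => //.
  by rewrite mulrA.
have gap : 2 / s2 < al / s1 < 2 / s1.
  move: hal => /andP [ha1 ha2].
  have -> : 2 / s2 = (2 / t) / s1 by rewrite /t; field; rewrite s1n; apply/eqP; lra.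
  by rewrite !ltr_pM2r ?invr_gt0 // ha1 ha2.
exists (al / s1); split; first by split.
move=> b hb eb.
exact: (unique_eig s1 s2 m b (al / s1) hs1 hs12 hm hb eb gap eig).
Qed.
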